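(* Let $\mathbb{R}$ be a strict Reedy category and let $G$ be a crossed $\mathbb{R}$-group compatible with the Reedy structure of $\mathbb{R}$. Then there is a unique dualizable generalized Reedy structure on the total category $\mathbb{R}G$ for which the embedding $\mathbb{R}\hookrightarrow\mathbb{R}G$ is a morphism of generalized Reedy categories.
   Context: A strict Reedy category is a small category $\mathbb{R}$ with wide subcategories $\mathbb{R}^+,\mathbb{R}^-$ and degree $d:\mathrm{Ob}(\mathbb{R})\to\mathbb{N}$ such that non-identity morphisms of $\mathbb{R}^+$ (resp. $\mathbb{R}^-$) strictly raise (resp. lower) degree and every morphism factors uniquely as a morphism of $\mathbb{R}^-$ followed by one of $\mathbb{R}^+$. A generalized Reedy structure on a small category $\mathbb{C}$: wide subcategories $\mathbb{C}^+,\mathbb{C}^-$ and degree $d$ such that (i) non-invertible morphisms of $\mathbb{C}^+$ (resp. $\mathbb{C}^-$) strictly raise (resp. lower) degree, and isomorphisms preserve degree; (ii) $\mathbb{C}^+\cap\mathbb{C}^-=\mathrm{Iso}(\mathbb{C})$; (iii) every morphism $f$ factors as $f=gh$ with $g\in\mathbb{C}^+$, $h\in\mathbb{C}^-$, uniquely up to isomorphism; (iv) if $\theta f=f$ with $\theta$ an isomorphism and $f\in\mathbb{C}^-$ then $\theta$ is an identity. It is dualizable if moreover (iv)$'$: if $f\theta=f$ with $\theta$ an isomorphism and $f\in\mathbb{C}^+$ then $\theta$ is an identity. A morphism of generalized Reedy categories is a functor preserving $(-)^+$, $(-)^-$ and degree. A crossed $\mathbb{R}$-group $G$ is a set-valued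 presheaf on $\mathbb{R}$ (action of $\alpha:s\to r$ written $\alpha^*:G_r\to G_s$) with a group structure on each $G_r$ (neutral $e_r$) and left actions $g_*$ of $G_r$ on each $\mathrm{Hom}_{\mathbb{R}}(s,r)$, satisfying for $g,h\in G_r$, $\alpha:s\to r$, $\beta:t\to s$: $g_*(\alpha\beta)=g_*(\alpha)\circ\alpha^*(g)_*(\beta)$, $g_*(1_r)=1_r$, $\alpha^*(gh)=h_*(\alpha)^*(g)\cdot\alpha^*(h)$, $\alpha^*(e_r)=e_s$. The total category $\mathbb{R}G$ has the objects of $\mathbb{R}$, morphisms $r\to s$ pairs $(\alpha,g)$ with $\alpha:r\to s$ in $\mathbb{R}$, $g\in G_r$, composition $(\alpha,g)\circ(\beta,h)=(\alpha\cdot g_*(\beta),\beta^*(g)\cdot h)$; $\mathbb{R}\hookrightarrow\mathbb{R}G$ by $\alpha\mapsto(\alpha,e)$. $G$ is compatible with the Reedy structure if (i) for $\alpha:r\to s$ in $\mathbb{R}^{\pm}$ and $g\in G_s$, $g_*(\alpha)\in\mathbb{R}^{\pm}$; (ii) if $\alpha:r\to s$ is in $\mathbb{R}^-$ and $g\in G_s$ satisfies $\alpha^*(g)=e_r$ and $g_*(\alpha)=\alpha$, then $g=e_s$. *)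

(* Defs.v *)
Set Implicit Arguments.
Unset Strict Implicit.

Record CatData := {
  Ob : Type;
  Hom : Ob -> Ob -> Type;
  cid : forall a, Hom a a;
  ccomp : forall a b c, Hom b c -> Hom a b -> Hom a c }.
Arguments Hom : clear implicits.
Arguments cid {c0} a.
Arguments ccomp {c0 a b c} _ _.

Definition IsCategory (C : CatData) : Prop :=
  (forall a b (f : Hom C a b), ccomp (cid b) f = f) /\
  (forall a b (f : Hom C a b), ccomp f (cid a) = f) /\
  (forall a b c d (f : Hom C c d) (g : Hom C b c) (h : Hom C a b),
      ccomp f (ccomp g h) = ccomp (ccomp f g) h).

Definition is_identity {C : CatData} {a b : Ob C} (f : Hom C a b) : Prop :=
  exists e : a = b,
    match e in _ = b' return Hom C a b' with eq_refl => cid a end = f.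

Definition is_iso {C : CatData} {a b : Ob C} (f : Hom C a b) : Prop :=
  exists g : Hom C b a, ccomp g f = cid a /\ ccomp f g = cid b.

Definition MorPred (C : CatData) := forall a b : Ob C, Hom C a b -> Prop.

Definition wide_subcat {C : CatData} (P : MorPred C) : Prop :=
  (forall a, P a a (cid a)) /\
  (forall a b c (g : Hom C b c) (f : Hom C a b),
      P b c g -> P a b f -> P a c (ccomp g f)).

Record ReedyData (C : CatData) := {
  rplus : MorPred C;
  rminus : MorPred C;
  rdeg : Ob C -> nat }.
Arguments rplus {C} _ {a b} _.
Arguments rminus {C} _ {a b} _.
Arguments rdeg {C} _ _.

Definition IsStrictReedy (C : CatData) (D : ReedyData C) : Prop :=
  wide_subcat (fun a b f => rplus D f) /\
  wide_subcat (fun a b f => rminus D f) /\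
  (forall a b (f : Hom C a b),
      rplus D f -> ~ is_identity f -> rdeg D a < rdeg D b) /\
  (forall a b (f : Hom C a b),
      rminus D f -> ~ is_identity f -> rdeg D b < rdeg D a) /\
  (forall a c (f : Hom C a c),
      exists! p : {b : Ob C & (Hom C a b * Hom C b c)%type},
        rminus D (fst (projT2 p)) /\ rplus D (snd (projT2 p)) /\
        ccomp (snd (projT2 p)) (fst (projT2 p)) = f).

Definition IsGenReedy (C : CatData) (D : ReedyData C) : Prop :=
  wide_subcat (fun a b f => rplus D f) /\
  wide_subcat (fun a b f => rminus D f) /\
  (forall a b (f : Hom C a b),
      rplus D f -> ~ is_iso f -> rdeg D a < rdeg D b) /\
  (forall a b (f : Hom C a b),
      rminus D f -> ~ is_iso f -> rdeg D b < rdeg D a) /\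
  (forall a b (f : Hom C a b), is_iso f -> rdeg D a = rdeg D b) /\
  (forall a b (f : Hom C a b), (rplus D f /\ rminus D f) <-> is_iso f) /\
  (forall a c (f : Hom C a c),
      exists b (h : Hom C a b) (g : Hom C b c),
        rplus D g /\ rminus D h /\ ccomp g h = f) /\
  (forall a b b' c (h : Hom C a b) (g : Hom C b c)
          (h' : Hom C a b') (g' : Hom C b' c),
      rplus D g -> rminus D h -> rplus D g' -> rminus D h' ->
      ccomp g h = ccomp g' h' ->
      exists theta : Hom C b b',
        is_iso theta /\ ccomp theta h = h' /\ ccomp g' theta = g) /\
  (forall a b (theta : Hom C b b) (f : Hom C a b),
      is_iso theta -> rminus D f -> ccomp theta f = f -> theta = cid b).

Definition IsDualizableGenReedy (C : CatData) (D : ReedyData C) : Prop :=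
  IsGenReedy D /\
  (forall a b (theta : Hom C a a) (f : Hom C a b),
      is_iso theta -> rplus D f -> ccomp f theta = f -> theta = cid a).

Record FunctorData (C C' : CatData) := {
  fob : Ob C -> Ob C';
  fmor : forall a b, Hom C a b -> Hom C' (fob a) (fob b) }.
Arguments fob {C C'} _ _.
Arguments fmor {C C'} _ {a b} _.

Definition IsFunctor (C C' : CatData) (F : FunctorData C C') : Prop :=
  (forall a, fmor F (cid a) = cid (fob F a)) /\
  (forall a b c (g : Hom C b c) (f : Hom C a b),
      fmor F (ccomp g f) = ccomp (fmor F g) (fmor F f)).

Definition IsReedyMorphism (C C' : CatData) (D : ReedyData C) (D' : ReedyData C')
    (F : FunctorData C C') : Prop :=
  IsFunctor F /\
  (forall a b (f : Hom C a b), rplus D f -> rplus D' (fmor F f)) /\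
  (forall a b (f : Hom C a b), rminus D f -> rminus D' (fmor F f)) /\
  (forall a, rdeg D' (fob F a) = rdeg D a).

Definition SameReedy (C : CatData) (D D' : ReedyData C) : Prop :=
  (forall a b (f : Hom C a b), rplus D f <-> rplus D' f) /\
  (forall a b (f : Hom C a b), rminus D f <-> rminus D' f) /\
  (forall a, rdeg D a = rdeg D' a).

Record CrossedData (R : CatData) := {
  grp : Ob R -> Type;
  gmul : forall r, grp r -> grp r -> grp r;
  gunit : forall r, grp r;
  ginv : forall r, grp r -> grp r;
  (* gres alpha g = alpha^*(g), for alpha : s -> r *)
  gres : forall s r, Hom R s r -> grp r -> grp s;
  (* gact g alpha = g_*(alpha), for g in G_r, alpha : s -> r *)
  gact : forall r s, grp r -> Hom R s r -> Hom R s r }.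
Arguments grp {R} _ _.
Arguments gmul {R} _ {r} _ _.
Arguments gunit {R} _ r.
Arguments ginv {R} _ {r} _.
Arguments gres {R} _ {s r} _ _.
Arguments gact {R} _ {r s} _ _.

Definition IsCrossedGroup (R : CatData) (G : CrossedData R) : Prop :=
  (forall r (g : grp G r), gres G (cid r) g = g) /\
  (forall t s r (alpha : Hom R s r) (beta : Hom R t s) (g : grp G r),
      gres G (ccomp alpha beta) g = gres G beta (gres G alpha g)) /\
  (forall r (x y z : grp G r), gmul G x (gmul G y z) = gmul G (gmul G x y) z) /\
  (forall r (x : grp G r), gmul G (gunit G r) x = x /\ gmul G x (gunit G r) = x) /\
  (forall r (x : grp G r),
      gmul G (ginv G x) x = gunit G r /\ gmul G x (ginv G x) = gunit G r) /\
  (forall r s (alpha : Hom R s r), gact G (gunit G r) alpha = alpha) /\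
  (forall r s (g h : grp G r) (alpha : Hom R s r),
      gact G (gmul G g h) alpha = gact G g (gact G h alpha)) /\
  (forall r s t (g : grp G r) (alpha : Hom R s r) (beta : Hom R t s),
      gact G g (ccomp alpha beta) =
      ccomp (gact G g alpha) (gact G (gres G alpha g) beta)) /\
  (forall r (g : grp G r), gact G g (cid r) = cid r) /\
  (forall r s (g h : grp G r) (alpha : Hom R s r),
      gres G alpha (gmul G g h) =
      gmul G (gres G (gact G h alpha) g) (gres G alpha h)) /\
  (forall r s (alpha : Hom R s r), gres G alpha (gunit G r) = gunit G s).

Definition IsCompatible (R : CatData) (D : ReedyData R) (G : CrossedData R) : Prop :=
  (forall r s (alpha : Hom R r s) (g : grp G s),
      rplus D alpha -> rplus D (gact G g alpha)) /\
  (forall r s (alpha : Hom R r s) (g : grp G s),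
      rminus D alpha -> rminus D (gact G g alpha)) /\
  (forall r s (alpha : Hom R r s) (g : grp G s),
      rminus D alpha -> gres G alpha g = gunit G r -> gact G g alpha = alpha ->
      g = gunit G s).

Definition TotalCat (R : CatData) (G : CrossedData R) : CatData := {|
  Ob := Ob R;
  Hom := fun r s => (Hom R r s * grp G r)%type;
  cid := fun r => (cid r, gunit G r);
  ccomp := fun r s t (ag : Hom R s t * grp G s) (bh : Hom R r s * grp G r) =>
    (ccomp (fst ag) (gact G (snd ag) (fst bh)),
     gmul G (gres G (fst bh) (snd ag)) (snd bh)) |}.

Definition TotalEmbedding (R : CatData) (G : CrossedData R)
  : FunctorData R (TotalCat G) := {|
  fob := fun r : Ob R => (r : Ob (TotalCat G));
  fmor := fun r s (alpha : Hom R r s) =>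
    ((alpha, gunit G r) : Hom (TotalCat G) r s) |}.

(* Main.v *)
Require Import Defs.
From Stdlib Require Import Eqdep Classical Lia.
Unset Implicit Arguments.

Lemma asym_id (R : CatData) (HC : IsCategory R) (P : MorPred R)
  (rel : nat -> nat -> Prop) (deg : Ob R -> nat)
  (Hasym : forall x y, rel x y -> rel y x -> False)
  (Hmono : forall a b (f : Hom R a b), P a b f -> ~ is_identity f -> rel (deg a) (deg b))
  a c (f : Hom R a c) (g : Hom R c a) :
  P _ _ f -> P _ _ g -> ccomp g f = cid a -> is_identity f.
Proof.
  intros Pf Pg Hgf.
  destruct (classic (is_identity f)) as [Hi|Hf]; [exact Hi|exfalso].
  destruct (classic (is_identity g)) as [[e He]|Hg].
  - subst a. simpl in He. subst g. destruct HC as [Hl _].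
    rewrite Hl in Hgf. apply Hf. exists eq_refl. simpl. congruence.
  - exact (Hasym _ _ (Hmono _ _ _ Pf Hf) (Hmono _ _ _ Pg Hg)).
Qed.

Lemma fact_uniq (R : CatData) (DR : ReedyData R) (HS : IsStrictReedy DR)
  a c b1 b2 (m1 : Hom R a b1) (p1 : Hom R b1 c) (m2 : Hom R a b2) (p2 : Hom R b2 c) :
  rminus DR m1 -> rplus DR p1 -> rminus DR m2 -> rplus DR p2 ->
  ccomp p1 m1 = ccomp p2 m2 ->
  existT (fun b => (Hom R a b * Hom R b c)%type) b1 (m1, p1) =
  existT (fun b => (Hom R a b * Hom R b c)%type) b2 (m2, p2).
Proof.
  intros H1 H2 H3 H4 E.
  destruct HS as [_ [_ [_ [_ Hf]]]].
  destruct (Hf a c (ccomp p1 m1)) as [x [_ Hu]].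
  rewrite <- (Hu (existT _ b1 (m1, p1))) by (simpl; auto).
  apply Hu. simpl. auto.
Qed.

Lemma strict_iso_plus (R : CatData) (HC : IsCategory R) (DR : ReedyData R)
  (HS : IsStrictReedy DR) a b (al : Hom R a b) (be : Hom R b a) :
  ccomp be al = cid a -> ccomp al be = cid b -> rplus DR al.
Proof.
  intros E1 E2.
  pose proof HS as HS'.
  destruct HS' as [[Pid Pc] [[Mid Mc] [Pdeg [Mdeg Hf]]]].
  destruct HC as [Hl [Hr Ha]].
  destruct (Hf a b al) as [[c [m p]] [[Hm [Hp Heq]] _]]. simpl in *.
  destruct (Hf c a (ccomp be p)) as [[c' [m2 p2]] [[Hm2 [Hp2 Heq2]] _]]. simpl in *.
  assert (Hx : ccomp (cid a) (cid a) = ccomp p2 (ccomp m2 m)).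
  { rewrite Hl, Ha, Heq2, <- Ha, Heq. auto. }
  pose proof (@fact_uniq _ _ HS _ _ _ _ _ _ _ _ (Mid a) (Pid a) (Mc _ _ _ _ _ Hm2 Hm) Hp2 Hx) as U.
  pose proof (f_equal (@projT1 _ _) U) as E. simpl in E. subst c'.
  apply inj_pairT2 in U. injection U as U1 U2.
  assert (Hid : is_identity m).
  { apply (@asym_id R (conj Hl (conj Hr Ha)) (fun x y f => rminus DR f) (fun x y => y < x) (rdeg DR))
      with (g := m2); auto.
    intros; lia. }
  destruct Hid as [e He]. subst c. simpl in He. subst m.
  rewrite Hr in Heq. subst p. exact Hp.
Qed.

Lemma strict_iso_id (R : CatData) (HC : IsCategory R) (DR : ReedyData R)
  (HS : IsStrictReedy DR) a b (al : Hom R a b) (be : Hom R b a) :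
  ccomp be al = cid a -> ccomp al be = cid b -> is_identity al.
Proof.
  intros E1 E2.
  pose proof (@strict_iso_plus _ HC _ HS _ _ _ _ E1 E2).
  pose proof (@strict_iso_plus _ HC _ HS _ _ _ _ E2 E1).
  destruct HS as [_ [_ [Pdeg _]]].
  apply (@asym_id R HC (fun x y f => rplus DR f) lt (rdeg DR)) with (g := be); auto.
  intros; lia.
Qed.

Lemma strict_pm_id (R : CatData) (HC : IsCategory R) (DR : ReedyData R)
  (HS : IsStrictReedy DR) a b (al : Hom R a b) :
  rplus DR al -> rminus DR al -> is_identity al.
Proof.
  intros Hp Hm.
  pose proof HS as HS'.
  destruct HS' as [[Pid Pc] [[Mid Mc] _]].
  destruct HC as [Hl [Hr Ha]].
  assert (Hx : ccomp al (cid a) = ccomp (cid b) al) by congruence.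
  pose proof (@fact_uniq _ _ HS _ _ _ _ _ _ _ _ (Mid a) Hp Hm (Pid b) Hx) as U.
  pose proof (f_equal (@projT1 _ _) U) as E. simpl in E. subst b.
  apply inj_pairT2 in U. injection U as U1 U2.
  exists eq_refl. exact U1.
Qed.
Set Implicit Arguments. Unset Strict Implicit.

Ltac dG HG := destruct HG as [Gres1 [GresC [Gassoc [Gunit [Ginv [Gact1 [GactM [GactC [GactId [GresM GresE]]]]]]]]]].

Lemma total_cat (R : CatData) (G : CrossedData R) :
  IsCategory R -> IsCrossedGroup G -> IsCategory (TotalCat G).
Proof.
  intros [Hl [Hr Ha]] HG. dG HG.
  split; [|split].
  - intros a b [f g]. simpl. rewrite Gact1, Hl, GresE. f_equal. apply Gunit.
  - intros a b [f g]. simpl. rewrite GactId, Hr, Gres1. f_equal. apply Gunit.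
  - intros a b c d [f1 g1] [f2 g2] [f3 g3]. simpl. f_equal.
    + rewrite GactC, GactM, Ha. reflexivity.
    + rewrite GresC, GresM, Gassoc. reflexivity.
Qed.

Lemma iso_comp (C : CatData) (HC : IsCategory C) a b c (g : Hom C b c) (f : Hom C a b) :
  is_iso g -> is_iso f -> is_iso (ccomp g f).
Proof.
  destruct HC as [Hl [Hr Ha]].
  intros [g' [G1 G2]] [f' [F1 F2]]. exists (ccomp f' g'). split.
  - rewrite <- Ha, (Ha _ _ _ _ g' g f), G1, Hl. exact F1.
  - rewrite <- Ha, (Ha _ _ _ _ f f' g'), F2, Hl. exact G2.
Qed.

Lemma iso_of_left (C : CatData) (HC : IsCategory C) a b (g : Hom C b a) (t : Hom C a b) :
  is_iso t -> ccomp g t = cid a -> is_iso g.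
Proof.
  destruct HC as [Hl [Hr Ha]].
  intros [t' [T1 T2]] E.
  assert (g = t').
  { rewrite <- (Hr _ _ g), <- T2, Ha, E, Hl. reflexivity. }
  subst. exists t. auto.
Qed.

Lemma grp_cancel_l (R : CatData) (G : CrossedData R) (HG : IsCrossedGroup G) r
  (x y : grp G r) : gmul G x y = y -> x = gunit G r.
Proof.
  dG HG. intro E.
  rewrite <- (proj2 (Gunit r x)), <- (proj2 (Ginv r y)), Gassoc, E. reflexivity.
Qed.

Lemma grp_cancel_r (R : CatData) (G : CrossedData R) (HG : IsCrossedGroup G) r
  (x y : grp G r) : gmul G x y = x -> y = gunit G r.
Proof.
  dG HG. intro E.
  rewrite <- (proj1 (Gunit r y)), <- (proj1 (Ginv r x)), <- Gassoc, E. reflexivity.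
Qed.

Lemma iso_cid_t (R : CatData) (G : CrossedData R) (HC : IsCategory R)
  (HG : IsCrossedGroup G) a (t : grp G a) :
  is_iso ((cid a, t) : Hom (TotalCat G) a a).
Proof.
  destruct HC as [Hl [Hr Ha]]. dG HG.
  exists (cid a, ginv G t). simpl. rewrite !GactId, !Hl, !Gres1.
  split; f_equal; apply Ginv.
Qed.

Lemma id_iso (R : CatData) (G : CrossedData R) (HC : IsCategory R)
  (HG : IsCrossedGroup G) a b (f : Hom (TotalCat G) a b) :
  is_identity (fst f) -> is_iso f.
Proof.
  destruct f as [al g]. intros [e He]. subst b. simpl in He. subst al.
  apply iso_cid_t; auto.
Qed.

Lemma iso_fst_id (R : CatData) (DR : ReedyData R) (G : CrossedData R) (HC : IsCategory R)
  (HS : IsStrictReedy DR) (HG : IsCrossedGroup G) a b (f : Hom (TotalCat G) a b) :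
  is_iso f -> is_identity (fst f).
Proof.
  intro Hi. destruct f as [al g].
  pose proof (total_cat HC HG) as HT.
  assert (Hi2 : is_iso ((al, gunit G a) : Hom (TotalCat G) a b)).
  { assert (E : ((al, gunit G a) : Hom (TotalCat G) a b) =
                ccomp ((al, g) : Hom (TotalCat G) a b) ((@cid R a, ginv G g) : Hom (TotalCat G) a a)).
    { pose proof HC as [Hl [Hr Ha]]. pose proof HG as HG'. dG HG'. simpl.
      rewrite GactId, Hr, Gres1. f_equal. symmetry. apply Ginv. }
    rewrite E. apply iso_comp; auto. apply iso_cid_t; auto. }
  destruct Hi2 as [[be h] [H1 H2]].
  pose proof HC as [Hl [Hr Ha]]. pose proof HG as HG'. dG HG'.
  simpl in H1, H2. injection H1 as H11 H12. injection H2 as H21 H22.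
  rewrite Gact1 in H21. rewrite GresE, (proj1 (Gunit _ _)) in H22. subst h.
  rewrite Gact1 in H11.
  simpl. apply (@strict_iso_id _ HC _ HS _ _ _ be); auto.
Qed.

Definition TotD (R : CatData) (DR : ReedyData R) (G : CrossedData R) : ReedyData (TotalCat G) :=
  {| rplus := fun a b (f : Hom (TotalCat G) a b) => rplus DR (fst f);
     rminus := fun a b (f : Hom (TotalCat G) a b) => rminus DR (fst f);
     rdeg := fun a => rdeg DR a |}.

Lemma TotD_gen (R : CatData) (DR : ReedyData R) (G : CrossedData R) :
  IsCategory R -> IsStrictReedy DR -> IsCrossedGroup G -> IsCompatible DR G ->
  IsDualizableGenReedy (TotD DR G).
Proof.
  intros HC HS HG HK.
  pose proof HC as [Hl [Hr Ha]]. pose proof HG as HG'. dG HG'.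
  pose proof HS as [[Pid Pc] [[Mid Mc] [Pdeg [Mdeg Hf]]]].
  destruct HK as [Kp [Km Ke]].
  split; [split; [|split; [|split; [|split; [|split; [|split; [|split; [|split]]]]]]]|].
  - split; simpl.
    + intros. apply Pid.
    + intros a b c [g1 k1] [f1 l1]. simpl. intros. apply Pc; auto.
  - split; simpl.
    + intros. apply Mid.
    + intros a b c [g1 k1] [f1 l1]. simpl. intros. apply Mc; auto.
  - simpl. intros a b f Hp Hn. apply (Pdeg _ _ (fst f)); auto.
    intro Hi. apply Hn. apply id_iso; auto.
  - simpl. intros a b f Hp Hn. apply (Mdeg _ _ (fst f)); auto.
    intro Hi. apply Hn. apply id_iso; auto.
  - simpl. intros a b f Hi.
    destruct (@iso_fst_id _ _ _ HC HS HG _ _ f Hi) as [e _]. subst. reflexivity.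
  - simpl. intros a b f. split.
    + intros [Hp Hm]. apply id_iso; auto. apply (@strict_pm_id _ HC _ HS); auto.
    + intro Hi. destruct (@iso_fst_id _ _ _ HC HS HG _ _ f Hi) as [e He].
      subst b. simpl in He. rewrite <- He. auto.
  - simpl. intros a c [al g].
    destruct (Hf a c al) as [[b [m p]] [[Hm [Hp Heq]] _]]. simpl in *.
    exists b, (m, g), (p, gunit G b). simpl. split; [auto|split; [auto|]].
    rewrite Gact1, GresE, (proj1 (Gunit _ _)), Heq. reflexivity.
  - simpl. intros a b b' c [h1 l1] [g1 k1] [h2 l2] [g2 k2]. simpl.
    intros P1 M1 P2 M2 E. injection E as E1 E2.
    pose proof (@fact_uniq _ _ HS _ _ _ _ _ _ _ _ (Km _ _ _ k1 M1) P1 (Km _ _ _ k2 M2) P2 E1) as U.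
    pose proof (f_equal (@projT1 _ _) U) as Eb. simpl in Eb. subst b'.
    apply inj_pairT2 in U. injection U as U1 U2. subst g2.
    exists (cid b, gmul G (ginv G k2) k1). split; [|split].
    + apply iso_cid_t; auto.
    + simpl. rewrite Hl. f_equal.
      * rewrite GactM, U1, <- GactM, (proj1 (Ginv _ _)), Gact1. reflexivity.
      * rewrite GresM, <- Gassoc, E2, U1, Gassoc, <- GresM, (proj1 (Ginv _ _)), GresE.
        apply Gunit.
    + simpl. rewrite GactId, Hr, Gres1, Gassoc, (proj2 (Ginv _ _)). f_equal. apply Gunit.
  - simpl. intros a b [th t] [al g] Hi Hm E.
    destruct (@iso_fst_id _ _ _ HC HS HG _ _ _ Hi) as [e He].
    rewrite (UIP_refl _ _ e) in He. simpl in He. subst th.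
    simpl in E. injection E as E1 E2. rewrite Hl in E1.
    apply grp_cancel_l in E2; auto.
    rewrite (Ke _ _ al t Hm E2 E1). reflexivity.
  - simpl. intros a b [th t] [al g] Hi Hp E.
    destruct (@iso_fst_id _ _ _ HC HS HG _ _ _ Hi) as [e He].
    rewrite (UIP_refl _ _ e) in He. simpl in He. subst th.
    simpl in E. injection E as E1 E2. rewrite Gres1 in E2.
    apply grp_cancel_r in E2; auto. subst t. reflexivity.
Qed.

Lemma TotD_mor (R : CatData) (DR : ReedyData R) (G : CrossedData R) :
  IsCategory R -> IsCrossedGroup G ->
  IsReedyMorphism DR (TotD DR G) (TotalEmbedding G).
Proof.
  intros HC HG. pose proof HG as HG'. dG HG'.
  split; [split|split; [|split]]; simpl; auto.
  intros a b c g f. rewrite Gact1, GresE. f_equal. symmetry. apply Gunit.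
Qed.

Lemma TotD_uniq (R : CatData) (DR : ReedyData R) (G : CrossedData R) :
  IsCategory R -> IsStrictReedy DR -> IsCrossedGroup G -> IsCompatible DR G ->
  forall D' : ReedyData (TotalCat G),
    IsDualizableGenReedy D' /\ IsReedyMorphism DR D' (TotalEmbedding G) ->
    SameReedy (TotD DR G) D'.
Proof.
  intros HC HS HG HK D' [[HGR _] [_ [HP [HM HDeg]]]].
  pose proof (total_cat HC HG) as HT.
  pose proof HT as [Tl [Tr Ta]].
  pose proof HC as [Hl [Hr Ha]]. pose proof HG as HG'. dG HG'.
  pose proof HS as [[Pid Pc] [[Mid Mc] [Pdeg [Mdeg Hf]]]].
  destruct HGR as [[Qid Qc] [[Nid Nc] [Qdeg [Ndeg [Ideg [QN [_ [Qu _]]]]]]]].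
  simpl in HP, HM, HDeg.
  assert (Dec1 : forall a b (al : Hom R a b) (g : grp G a),
    ((al, g) : Hom (TotalCat G) a b) =
    ccomp ((al, gunit G a) : Hom (TotalCat G) a b) ((@cid R a, g) : Hom (TotalCat G) a a)).
  { intros. simpl. rewrite GactId, Hr, GresE. f_equal. symmetry. apply Gunit. }
  assert (Dec2 : forall a b (al : Hom R a b) (g : grp G a),
    ((al, gunit G a) : Hom (TotalCat G) a b) =
    ccomp ((al, g) : Hom (TotalCat G) a b) ((@cid R a, ginv G g) : Hom (TotalCat G) a a)).
  { intros. simpl. rewrite GactId, Hr, Gres1. f_equal. symmetry. apply Ginv. }
  assert (Dec3 : forall a b c (m : Hom R a c) (p : Hom R c b),
    ((ccomp p m, gunit G a) : Hom (TotalCat G) a b) =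
    ccomp ((p, gunit G c) : Hom (TotalCat G) c b) ((m, gunit G a) : Hom (TotalCat G) a c)).
  { intros. simpl. rewrite Gact1, GresE. f_equal. symmetry. apply Gunit. }
  assert (IsoP : forall a (g : grp G a), rplus D' ((@cid R a, g) : Hom (TotalCat G) a a)).
  { intros. apply QN. apply iso_cid_t; auto. }
  assert (IsoM : forall a (g : grp G a), rminus D' ((@cid R a, g) : Hom (TotalCat G) a a)).
  { intros. apply QN. apply iso_cid_t; auto. }
  split; [|split].
  - intros a b [al g]. simpl. split.
    + intro Hp. rewrite (Dec1 a b al g). apply Qc; auto.
    + intro Hq. assert (Hq2 : rplus D' ((al, gunit G a) : Hom (TotalCat G) a b)).
      { rewrite (Dec2 a b al g). apply Qc; auto. }
      destruct (Hf a b al) as [[c [m p]] [[Hm [Hp Heq]] _]]. simpl in Hm, Hp, Heq.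
      subst al.
      destruct (Qu a a c b (@cid (TotalCat G) a) ((ccomp p m, gunit G a) : Hom (TotalCat G) a b)
                  ((m, gunit G a) : Hom (TotalCat G) a c) ((p, gunit G c) : Hom (TotalCat G) c b))
        as [th [Hth [E1 E2]]];
        [exact Hq2 | apply Nid | apply HP; exact Hp | apply HM; exact Hm | rewrite Tr; apply Dec3 |].
      rewrite Tr in E1. subst th.
      pose proof (Ideg _ _ _ Hth) as Hd. rewrite !HDeg in Hd.
      destruct (classic (is_identity m)) as [[e He]|Hn].
      * subst c. simpl in He. subst m. rewrite Hr. auto.
      * exfalso. pose proof (Mdeg _ _ m Hm Hn). lia.
  - intros a b [al g]. simpl. split.
    + intro Hp. rewrite (Dec1 a b al g). apply Nc; auto.
    + intro Hq. assert (Hq2 : rminus D' ((al, gunit G a) : Hom (TotalCat G) a b)).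
      { rewrite (Dec2 a b al g). apply Nc; auto. }
      destruct (Hf a b al) as [[c [m p]] [[Hm [Hp Heq]] _]]. simpl in Hm, Hp, Heq.
      subst al.
      destruct (Qu a b c b ((ccomp p m, gunit G a) : Hom (TotalCat G) a b) (@cid (TotalCat G) b)
                  ((m, gunit G a) : Hom (TotalCat G) a c) ((p, gunit G c) : Hom (TotalCat G) c b))
        as [th [Hth [E1 E2]]];
        [apply Qid | exact Hq2 | apply HP; exact Hp | apply HM; exact Hm | rewrite Tl; apply Dec3 |].
      pose proof (iso_of_left HT Hth E2) as Hiso.
      pose proof (Ideg _ _ _ Hiso) as Hd. rewrite !HDeg in Hd.
      destruct (classic (is_identity p)) as [[e He]|Hn].
      * subst c. simpl in He. subst p. rewrite Hl. auto.
      * exfalso. pose proof (Pdeg _ _ p Hp Hn). lia.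
  - intro a. simpl. symmetry. apply HDeg.
Qed.

Theorem proposition2p10 (R : CatData) (DR : ReedyData R) (G : CrossedData R) :
  IsCategory R ->
  IsStrictReedy DR ->
  IsCrossedGroup G ->
  IsCompatible DR G ->
  exists D : ReedyData (TotalCat G),
    (IsDualizableGenReedy D /\ IsReedyMorphism DR D (TotalEmbedding G)) /\
    (forall D' : ReedyData (TotalCat G),
        IsDualizableGenReedy D' /\ IsReedyMorphism DR D' (TotalEmbedding G) ->
        SameReedy D D').
Proof.
  intros HC HS HG HK. exists (TotD DR G). split; [split|].
  - apply TotD_gen; auto.
  - apply TotD_mor; auto.
  - apply TotD_uniq; auto.
Qed.
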